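(* Let $\phi:\mathbb{R}\to\mathbb{R}$ be differentiable, $x\in\mathbb{R}^{k_0}$ with $\|x\|_2=1$, and $a,b\in\mathbb{R}^k$ with $a^T\phi(b)=1$, and let $f(z)=xa^T\phi(bx^Tz)$ (so $f(x)=x$). Then $\lambda_1(\mathbf{J}(f(x)))=a^T(\phi'(b)\odot b)$.
   Context: $\phi,\phi'$ are applied coordinatewise; $\odot$ is the Hadamard (coordinatewise) product. $\mathbf{J}(f(x))$ is the Jacobian of $f$ at $x$ and $\lambda_1$ its top eigenvalue (eigenvalue of largest absolute value). In the paper this setting arises as the trained weights $A^{(\infty)}=xa^T$, $B^{(\infty)}=bx^T$ of a 1-hidden-layer autoencoder $A\phi(Bz)$ trained to zero error on the single example $x$. *)

(* Defs.v *)
From HB Require Import structures.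
From mathcomp Require Import all_boot all_order all_algebra.
From mathcomp Require Import all_classical all_reals all_analysis.
Set Implicit Arguments. Unset Strict Implicit. Unset Printing Implicit Defensive.
Import Order.TTheory GRing.Theory Num.Theory.
Import numFieldNormedType.Exports.
Local Open Scope ring_scope.

Definition top_eigenvalue (R : realType) (n : nat) (A : 'M[R]_n) (lam : R) :=
  eigenvalue A lam /\ (forall mu : R, eigenvalue A mu -> `|mu| <= `|lam|).

Definition cw (R : realType) (k : nat) (phi : R -> R) (v : 'rV[R]_k) : 'rV[R]_k :=
  map_mx phi v.

(* Main.v *)
Require Import Defs.
From HB Require Import structures.
From mathcomp Require Import all_boot all_order all_algebra.
From mathcomp Require Import all_classical all_reals all_analysis.
Import Order.TTheory GRing.Theory Num.Theory.
Import numFieldNormedType.Exports.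
Local Open Scope ring_scope.

Lemma dscl (R : realType) (c t : R) :
  derivable (fun s : R => s * c) t 1 /\ derive1 (fun s : R => s * c) t = c.
Proof.
have d : derivable (fun s : R => s * c) t 1.
  apply/derivable1_diffP.
  have -> : (fun s : R => s * c) = ( *:%R ^~ c) by apply/funext => s.
  by [].
split => //.
by rewrite derive1Mr ?derive1_id ?mul1r //; exact: derivable_id.
Qed.

Lemma dterm (R : realType) (phi : R -> R) (c e t : R) :
  (forall t : R, derivable phi t 1) ->
  derivable (fun s : R => phi (s * c) * e) t 1 /\
  derive1 (fun s : R => phi (s * c) * e) t = derive1 phi (t * c) * c * e.
Proof.
move=> dphi; have [d1 d1v] := dscl _ c t.
have dc : derivable (phi \o (fun s : R => s * c)) t 1.
  apply/derivable1_diffP; apply: differentiable_comp; apply/derivable1_diffP => //.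
split.
  apply/derivable1_diffP; apply: differentiableM; apply/derivable1_diffP => //.
rewrite (derive1Mr (f := phi \o (fun s : R => s * c))) //.
by rewrite derive1_comp // d1v.
Qed.

Theorem proposition4 (R : realType) (k0 k : nat) (phi : R -> R)
  (x : 'rV[R]_k0) (a b : 'rV[R]_k) :
  (forall t : R, derivable phi t 1) ->
  Num.sqrt (\sum_(i < k0) x 0 i ^+ 2) = 1 ->
  (cw phi b *m a^T) 0 0 = 1 ->
  top_eigenvalue
    (jacobian (fun z : 'rV[R]_k0 => (cw phi ((z *m x^T) *m b) *m a^T) *m x) x)
    ((map2_mx (fun u v => u * v) (cw (derive1 phi) b) b *m a^T) 0 0).
Proof.
move=> dphi nx _.
set c := (map2_mx _ _ _ *m _) 0 0.
pose l := fun z : 'rV[R]_k0 => (z *m x^T) 0 0.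
pose h := fun (j : 'I_k) (t : R) => phi (t * b 0 j) * a 0 j.
pose g := fun t : R => \sum_(j < k) h j t.
have fE : (fun z : 'rV[R]_k0 => (cw phi ((z *m x^T) *m b) *m a^T) *m x)
    = (fun z => g (l z) *: x).
  apply/funext => z; apply/rowP => i; rewrite !mxE big_ord1 !mxE.
  congr (_ * _); apply: eq_bigr => j _; rewrite /h /cw !mxE big_ord1 !mxE.
  by rewrite /h /l [in RHS]mxE.
have lZ : forall r v, l (r *: v) = r * l v.
  by move=> r v; rewrite /l -scalemxAl mxE.
have llin : linear l by move=> r u v; rewrite /l mulmxDl -scalemxAl !mxE.
pose lL : {linear 'rV[R]_k0 -> R} := HB.pack l (GRing.isLinear.Build _ _ _ _ _ llin).
have lE : l = \sum_(i < k0) (fun z : 'rV[R]_k0 => z 0 i * x 0 i).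
  apply/funext => z; rewrite fct_sumE /l mxE; apply: eq_bigr => i _.
  by rewrite mxE.
have lc : continuous lL.
  move=> z; apply: differentiable_continuous; rewrite /= lE.
  apply: differentiable_sum => i; apply: differentiableM => //.
  exact: differentiable_coord.
have dl : differentiable l x by exact: (linear_differentiable x lc).
have dlE : 'd l x = l :> (_ -> _) by exact: (diff_lin x lc).
have sge0 : 0 <= \sum_(i < k0) x 0 i ^+ 2 by apply: sumr_ge0 => i _; exact: sqr_ge0.
have s1 : \sum_(i < k0) x 0 i ^+ 2 = 1 by rewrite -(sqr_sqrtr sge0) nx expr1n.
have lx : l x = 1.
  by rewrite /l mxE -s1; apply: eq_bigr => i _; rewrite mxE expr2.
have gE : g = \sum_(j < k) h j by apply/funext => t; rewrite fct_sumE.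
have dg : derivable g 1 1.
  rewrite gE; apply: derivable_sum => j; exact: (proj1 (dterm _ phi (b 0 j) (a 0 j) 1 dphi)).
have g'1 : derive1 g 1 = c.
  rewrite derive1E gE derive_sum; last first.
    by move=> j; exact: (proj1 (dterm _ phi (b 0 j) (a 0 j) 1 dphi)).
  rewrite /c mxE; apply: eq_bigr => j _.
  rewrite -derive1E (proj2 (dterm _ phi (b 0 j) (a 0 j) 1 dphi)) /cw !mxE mul1r.
  by [].
have Jv : forall v, v *m jacobian
    (fun z : 'rV[R]_k0 => (cw phi ((z *m x^T) *m b) *m a^T) *m x) x
    = (l v * c) *: x.
  move=> v; rewrite /jacobian mul_rV_lin1 fE.
  have dgl : differentiable (g \o l) x.
    apply: differentiable_comp => //; rewrite lx; exact/derivable1_diffP.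
  rewrite (diffZl x dgl) diff_comp //; last by rewrite lx; exact/derivable1_diffP.
  by rewrite /= dlE lx (deriv1E dg) g'1.
have xnz : x != 0.
  apply/eqP => x0; move: nx; rewrite x0 (eq_bigr (fun _ => 0)) ?big1 ?sqrtr0 //.
    by move=> /eqP; rewrite eq_sym oner_eq0.
  by move=> i _; rewrite mxE expr0n.
split.
  by apply/eigenvalueP; exists x => //; rewrite Jv lx mul1r.
move=> mu /eigenvalueP [v hv vnz]; rewrite Jv in hv.
have [->|mu0] := eqVneq mu 0; first by rewrite normr0.
have e1 : l v * c = mu * l v by rewrite -[LHS]mulr1 -lx -lZ hv lZ.
have [lv0|lv0] := eqVneq (l v) 0.
  move: hv; rewrite lv0 mul0r scale0r => /esym /eqP; rewrite scaler_eq0.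
  by rewrite (negPf mu0) (negPf vnz).
suff -> : mu = c by [].
by apply: (mulIf lv0); rewrite -e1 mulrC.
Qed.
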